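(* Let $H$ be a weak Hopf algebra with bijective antipode $S$, and in ${H_{par}^w}$ put $E_h=[h_1][S(h_2)]$ and $\tilde E_h=[S(h_1)][h_2]$. Then for all $h,k\in H$: (a) $E_k[h]=[h_2]E_{S^{-1}(h_1)k}$; (b) $[h]\tilde E_k=\tilde E_{kS^{-1}(h_2)}[h_1]$; (c) $E_k[h]=\tilde E_{S^{-1}(h_2)}E_k[h_1]$; (d) $[h]\tilde E_k=[h_2]\tilde E_kE_{S^{-1}(h_1)}$.
   Context: All algebras are associative and unital over a field $\Bbbk$; Sweedler notation $\Delta(h)=h_1\otimes h_2$. A weak Hopf algebra is $(H,m,u,\Delta,\varepsilon,S)$ with $H$ an algebra, $(H,\Delta,\varepsilon)$ a coalgebra, and for all $g,h,k$: $\Delta(kh)=\Delta(k)\Delta(h)$; $\varepsilon(kh_1)\varepsilon(h_2g)=\varepsilon(khg)=\varepsilon(kh_2)\varepsilon(h_1g)$; $(1\otimes\Delta(1))(\Delta(1)\otimes1)=\Delta^2(1)=(\Delta(1)\otimes1)(1\otimes\Delta(1))$; $h_1S(h_2)=\varepsilon(1_1h)1_2$; $S(h_1)h_2=1_1\varepsilon(h1_2)$; $S(h)=S(h_1)h_2S(h_3)$, where $\Delta(1)=1_1\otimes1_2$. ${H_{par}^w}=T(H)/I$, where $T(H)$ is the tensor algebra of the vector space $H$ and $I$ is the ideal generated by, for all $h,k\in H$: $1_H-1_{T(H)}$; $h\otimes k_1\otimes S(k_2)-hk_1\otimes S(k_2)$; $h\otimes S(k_1)\otimes k_2-hS(k_1)\otimes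 k_2$; $h_1\otimes S(h_2)\otimes k-h_1\otimes S(h_2)k$; $S(h_1)\otimes h_2\otimes k-S(h_1)\otimes h_2k$; $h-h_1\otimes S(h_2)\otimes h_3$; $[h]$ denotes the class of $h$. *)

(* Defs.v *)
From HB Require Import structures.
From mathcomp Require Import all_boot all_algebra.
Set Implicit Arguments. Unset Strict Implicit. Unset Printing Implicit Defensive.
Import GRing.Theory.
Local Open Scope ring_scope.

(* Tensors.  An element of H (x) H (resp. H (x) H (x) H) is represented by a  *)
(* finite formal sum of simple tensors, i.e. a list of pairs (triples).       *)
(* Two such lists denote the same tensor iff they agree under every bilinear *)
(* (trilinear) map into every K-vector space: this is exactly the universal  *)
(* property of the tensor product.  The coproduct is then a function          *)
(* D : H -> seq (H * H) choosing a Sweedler representation                    *)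
(*   Delta(h) = \sum_(p <- D h) p.1 (x) p.2 ,                                 *)
(* and every Sweedler expression below is (multi)linear in the legs, hence   *)
(* independent of the chosen representation.                                  *)

Section Tensors.
Variables (K : fieldType) (H : lmodType K).

Definition linmap (V : lmodType K) (f : H -> V) :=
  forall (c : K) (x y : H), f (c *: x + y) = c *: f x + f y.

Definition bilin (V : lmodType K) (f : H -> H -> V) :=
  (forall b, linmap (fun a => f a b)) /\ (forall a, linmap (f a)).

Definition trilin (V : lmodType K) (f : H -> H -> H -> V) :=
  [/\ forall b c, linmap (fun a => f a b c),
      forall a c, linmap (fun b => f a b c) &
      forall a b, linmap (f a b)].

Definition tens2_eq (t u : seq (H * H)) : Prop :=
  forall (V : lmodType K) (f : H -> H -> V), bilin f ->
    \sum_(p <- t) f p.1 p.2 = \sum_(p <- u) f p.1 p.2.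

Definition tens3_eq (t u : seq (H * H * H)) : Prop :=
  forall (V : lmodType K) (f : H -> H -> H -> V), trilin f ->
    \sum_(p <- t) f p.1.1 p.1.2 p.2 = \sum_(p <- u) f p.1.1 p.1.2 p.2.

Definition tens2_scale (c : K) (t : seq (H * H)) : seq (H * H) :=
  [seq (c *: p.1, p.2) | p <- t].

End Tensors.

Section WeakHopf.
Variables (K : fieldType) (H : algType K).
Variables (D : H -> seq (H * H)) (eps : H -> K) (S : H -> H).

Record is_weak_hopf : Prop := {
  comul_linear : forall (c : K) (x y : H),
      tens2_eq (D (c *: x + y)) (tens2_scale c (D x) ++ D y);
  counit_linear : forall (c : K) (x y : H), eps (c *: x + y) = c * eps x + eps y;
  coassoc : forall h : H,
      tens3_eq [seq (q.1, q.2, p.2) | p <- D h, q <- D p.1]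
               [seq (p.1, q.1, q.2) | p <- D h, q <- D p.2];
  counitL : forall h : H, \sum_(p <- D h) eps p.1 *: p.2 = h;
  counitR : forall h : H, \sum_(p <- D h) eps p.2 *: p.1 = h;
  antipode_linear : forall (c : K) (x y : H), S (c *: x + y) = c *: S x + S y;
  comul_mul : forall k h : H,
      tens2_eq (D (k * h)) [seq (p.1 * q.1, p.2 * q.2) | p <- D k, q <- D h];
  counit_weak1 : forall k h g : H,
      \sum_(p <- D h) eps (k * p.1) * eps (p.2 * g) = eps (k * h * g);
  counit_weak2 : forall k h g : H,
      eps (k * h * g) = \sum_(p <- D h) eps (k * p.2) * eps (p.1 * g);
  (* (1 (x) Delta(1))(Delta(1) (x) 1) = Delta^2(1) = (Delta(1) (x) 1)(1 (x) Delta(1)) *)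
  comul_unit1 :
      tens3_eq [seq (q.1, p.1 * q.2, p.2) | p <- D 1, q <- D 1]
               [seq (q.1, q.2, p.2) | p <- D 1, q <- D p.1];
  comul_unit2 :
      tens3_eq [seq (q.1, q.2, p.2) | p <- D 1, q <- D p.1]
               [seq (p.1, p.2 * q.1, q.2) | p <- D 1, q <- D 1];
  antipode_target : forall h : H,
      \sum_(p <- D h) p.1 * S p.2 = \sum_(q <- D 1) eps (q.1 * h) *: q.2;
  antipode_source : forall h : H,
      \sum_(p <- D h) S p.1 * p.2 = \sum_(q <- D 1) eps (h * q.2) *: q.1;
  antipode_SHS : forall h : H,
      S h = \sum_(p <- D h) \sum_(q <- D p.2) S p.1 * q.1 * S q.2
}.

(* The algebra H_par^w = T(H)/I, given by its universal property:            *)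
(* an algebra A together with the map [_] : H -> A (the class of h), which   *)
(* is linear (T(H) is the tensor algebra of the vector space H), satisfies    *)
(* the defining relations of I, and is universal among such maps.            *)

Definition wpar_relations (A : algType K) (pi : H -> A) : Prop :=
  [/\ forall (c : K) (x y : H), pi (c *: x + y) = c *: pi x + pi y,
      pi 1 = 1,
      forall h k : H, \sum_(p <- D k) pi h * pi p.1 * pi (S p.2)
                      = \sum_(p <- D k) pi (h * p.1) * pi (S p.2),
      forall h k : H, \sum_(p <- D k) pi h * pi (S p.1) * pi p.2
                      = \sum_(p <- D k) pi (h * S p.1) * pi p.2 &
      [/\
      forall h k : H, \sum_(p <- D h) pi p.1 * pi (S p.2) * pi k
                      = \sum_(p <- D h) pi p.1 * pi (S p.2 * k),
      forall h k : H, \sum_(p <- D h) pi (S p.1) * pi p.2 * pi k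
                      = \sum_(p <- D h) pi (S p.1) * pi (p.2 * k) &
      forall h : H, pi h = \sum_(p <- D h) \sum_(q <- D p.2)
                             pi p.1 * pi (S q.1) * pi q.2]].

Definition alg_hom (A B : algType K) (f : A -> B) : Prop :=
  [/\ forall (c : K) (x y : A), f (c *: x + y) = c *: f x + f y,
      forall x y : A, f (x * y) = f x * f y &
      f 1 = 1].

Definition is_Hparw (A : algType K) (pi : H -> A) : Prop :=
  wpar_relations pi /\
  forall (B : algType K) (rho : H -> B), wpar_relations rho ->
    exists f : A -> B,
      [/\ alg_hom f, forall h, f (pi h) = rho h &
          forall g : A -> B, alg_hom g -> (forall h, g (pi h) = rho h) ->
            forall x, g x = f x].

Definition Eop (A : algType K) (pi : H -> A) (h : H) : A :=
  \sum_(p <- D h) pi p.1 * pi (S p.2).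

Definition Etop (A : algType K) (pi : H -> A) (h : H) : A :=
  \sum_(p <- D h) pi (S p.1) * pi p.2.

End WeakHopf.

(* Main.v *)
Require Import Defs.
From HB Require Import structures.
From mathcomp Require Import all_boot all_algebra.
Set Implicit Arguments. Unset Strict Implicit. Unset Printing Implicit Defensive.
Import GRing.Theory.
Local Open Scope ring_scope.

Module WA.
Set Implicit Arguments. Unset Strict Implicit. Unset Printing Implicit Defensive.

Section LinBasics.
Variable K : fieldType.

Definition linK (H : lmodType K) (g : H -> K) :=
  forall (c : K) (x y : H), g (c *: x + y) = c * g x + g y.

Lemma lmD (H V : lmodType K) (f : H -> V) : linmap f -> forall x y, f (x + y) = f x + f y.
Proof. by move=> L x y; have := L 1 x y; rewrite !scale1r. Qed.

Lemma lm0 (H V : lmodType K) (f : H -> V) : linmap f -> f 0 = 0.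
Proof.
move=> L; have := L 1 0 0; rewrite !scale1r addr0 => h.
by apply: (@addIr _ (f 0)); rewrite add0r -h.
Qed.

Lemma lmZ (H V : lmodType K) (f : H -> V) : linmap f -> forall c x, f (c *: x) = c *: f x.
Proof. by move=> L c x; have := L c x 0; rewrite !addr0 (lm0 L) addr0. Qed.

Lemma lm_sum (H V : lmodType K) (f : H -> V) : linmap f ->
  forall (I : Type) (s : seq I) (P : pred I) (F : I -> H),
  f (\sum_(i <- s | P i) F i) = \sum_(i <- s | P i) f (F i).
Proof. by move=> L I s P F; apply: (big_morph f (lmD L) (lm0 L)). Qed.

Lemma lkD (H : lmodType K) (g : H -> K) : linK g -> forall x y, g (x + y) = g x + g y.
Proof. by move=> L x y; have := L 1 x y; rewrite !scale1r mul1r. Qed.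

Lemma lk0 (H : lmodType K) (g : H -> K) : linK g -> g 0 = 0.
Proof.
move=> L; have := L 1 0 0; rewrite !scale1r addr0 mul1r => h.
by apply: (@addIr _ (g 0)); rewrite add0r -h.
Qed.

Lemma lk_sum (H : lmodType K) (g : H -> K) : linK g ->
  forall (I : Type) (s : seq I) (P : pred I) (F : I -> H),
  g (\sum_(i <- s | P i) F i) = \sum_(i <- s | P i) g (F i).
Proof. by move=> L I s P F; apply: (big_morph g (lkD L) (lk0 L)). Qed.

Lemma lkZ (H : lmodType K) (g : H -> K) : linK g -> forall c x, g (c *: x) = c * g x.
Proof. by move=> L c x; have := L c x 0; rewrite !addr0 (lk0 L) addr0. Qed.

Lemma lm_id (H : lmodType K) : linmap (fun x : H => x).
Proof. by []. Qed.

Lemma lm_add (H V : lmodType K) (f g : H -> V) :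
  linmap f -> linmap g -> linmap (fun x => f x + g x).
Proof.
move=> Lf Lg c x y; rewrite Lf Lg scalerDr.
by rewrite -!addrA; congr (_ + _); rewrite addrCA.
Qed.

Lemma lm_sum_fun (H V : lmodType K) (I : Type) (s : seq I) (F : I -> H -> V) :
  (forall i, linmap (F i)) -> linmap (fun x => \sum_(i <- s) F i x).
Proof.
move=> L c x y; elim: s => [|i s IH]; first by rewrite !big_nil scaler0 addr0.
rewrite !big_cons IH L scalerDr.
rewrite -!addrA; congr (_ + _); rewrite !addrA; congr (_ + _); by rewrite addrC.
Qed.

Lemma lm_Z (H V : lmodType K) (f : H -> V) (c : K) :
  linmap f -> linmap (fun x => c *: f x).
Proof. by move=> L d x y; rewrite L scalerDr !scalerA mulrC. Qed.

Lemma lm_Zl (H V : lmodType K) (g : H -> K) (v : V) :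
  linK g -> linmap (fun x => g x *: v).
Proof. by move=> L c x y; rewrite L scalerDl scalerA. Qed.

Lemma lm_mull (H : lmodType K) (A : algType K) (a : A) (f : H -> A) :
  linmap f -> linmap (fun x => a * f x).
Proof. by move=> L c x y; rewrite L mulrDr scalerAr. Qed.

Lemma lm_mulr (H : lmodType K) (A : algType K) (a : A) (f : H -> A) :
  linmap f -> linmap (fun x => f x * a).
Proof. by move=> L c x y; rewrite L mulrDl scalerAl. Qed.

Lemma lm_comp (H V W : lmodType K) (g : V -> W) (f : H -> V) :
  linmap g -> linmap f -> linmap (fun x => g (f x)).
Proof. by move=> Lg Lf c x y; rewrite Lf Lg. Qed.

Lemma lk_comp (H V : lmodType K) (g : V -> K) (f : H -> V) :
  linK g -> linmap f -> linK (fun x => g (f x)).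
Proof. by move=> Lg Lf c x y; rewrite Lf Lg. Qed.

Lemma lk_mull (H : lmodType K) (k : K) (g : H -> K) :
  linK g -> linK (fun x => k * g x).
Proof. by move=> L c x y; rewrite L mulrDr mulrCA. Qed.

Lemma lk_mulr (H : lmodType K) (k : K) (g : H -> K) :
  linK g -> linK (fun x => g x * k).
Proof. by move=> L c x y; rewrite L mulrDl mulrA. Qed.


Lemma lm_B1 (H V : lmodType K) (F : H -> H -> V) (f : H -> H) b :
  bilin F -> linmap f -> linmap (fun x => F (f x) b).
Proof. by case=> L1 _ L; apply: (lm_comp (L1 b) L). Qed.
Lemma lm_B2 (H V : lmodType K) (F : H -> H -> V) (f : H -> H) a :
  bilin F -> linmap f -> linmap (fun x => F a (f x)).
Proof. by case=> _ L1 L; apply: (lm_comp (L1 a) L). Qed.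
Lemma lm_T1 (H V : lmodType K) (F : H -> H -> H -> V) (f : H -> H) b c :
  trilin F -> linmap f -> linmap (fun x => F (f x) b c).
Proof. by case=> L1 _ _ L; apply: (lm_comp (L1 b c) L). Qed.
Lemma lm_T2 (H V : lmodType K) (F : H -> H -> H -> V) (f : H -> H) a c :
  trilin F -> linmap f -> linmap (fun x => F a (f x) c).
Proof. by case=> _ L1 _ L; apply: (lm_comp (L1 a c) L). Qed.
Lemma lm_T3 (H V : lmodType K) (F : H -> H -> H -> V) (f : H -> H) a b :
  trilin F -> linmap f -> linmap (fun x => F a b (f x)).
Proof. by case=> _ _ L1 L; apply: (lm_comp (L1 a b) L). Qed.

End LinBasics.

End WA.
Import WA.

Module WB.
Set Implicit Arguments. Unset Strict Implicit. Unset Printing Implicit Defensive.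

Section WH.
Variables (K : fieldType) (H : algType K).
Variables (D : H -> seq (H * H)) (eps : H -> K) (S : H -> H).
Hypothesis W : is_weak_hopf D eps S.

Definition sw (V : lmodType K) (F : H -> H -> V) (x : H) : V :=
  \sum_(p <- D x) F p.1 p.2.

Lemma linS : linmap S.
Proof. exact: antipode_linear W. Qed.
Lemma linEps : linK eps.
Proof. exact: counit_linear W. Qed.

Lemma lm_S (f : H -> H) : linmap f -> linmap (fun x => S (f x)).
Proof. by move=> L; apply: lm_comp L; apply: linS. Qed.
Lemma lk_eps (f : H -> H) : linK (fun x => eps x) -> linmap f -> linK (fun x => eps (f x)).
Proof. by move=> _ L; apply: lk_comp L; apply: linEps. Qed.
Lemma lk_eps' (f : H -> H) : linmap f -> linK (fun x => eps (f x)).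
Proof. by move=> L; apply: lk_comp L; apply: linEps. Qed.

Lemma sw_lin (V : lmodType K) (F : H -> H -> V) : bilin F -> linmap (sw F).
Proof.
move=> BF c x y; rewrite /sw (comul_linear W c x y BF) big_cat /=.
rewrite big_map scaler_sumr; congr (_ + _); apply: eq_bigr => p _ /=.
by case: BF => /(_ p.2) /lmZ ->.
Qed.

Lemma lm_sw (V : lmodType K) (F : H -> H -> V) (f : H -> H) :
  bilin F -> linmap f -> linmap (fun x => sw F (f x)).
Proof. by move=> BF L; apply: lm_comp L; apply: sw_lin. Qed.

Lemma lm_swF (V : lmodType K) (F : H -> H -> H -> V) (y : H) :
  (forall a b, linmap (fun x => F x a b)) -> linmap (fun x => sw (F x) y).
Proof. by move=> L; rewrite /sw; apply: lm_sum_fun => p; apply: L. Qed.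

End WH.

Ltac lin_step := first
  [ assumption
  | apply: lm_id
  | apply: lm_add
  | apply: lm_sum_fun => ?
  | apply: lm_Z
  | apply: lm_Zl
  | apply: lm_mull
  | apply: lm_mulr
  | apply: lk_mull
  | apply: lk_mulr
  | apply: lk_eps'; [eassumption|]
  | apply: lm_S; [eassumption|]
  | apply: lm_sw; [eassumption|split=> ? /=|]
  | apply: lm_swF => ? ? /=
  | apply: lm_B1; [eassumption|]
  | apply: lm_B2; [eassumption|]
  | apply: lm_T1; [eassumption|]
  | apply: lm_T2; [eassumption|]
  | apply: lm_T3; [eassumption|]
  | eassumption
  ].
Ltac lin := repeat lin_step.
Ltac bil := split=> ? /=; lin.
Ltac tril := split=> ? ? /=; lin.

Section WH2.
Variables (K : fieldType) (H : algType K).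
Variables (D : H -> seq (H * H)) (eps : H -> K) (S : H -> H).
Hypothesis W : is_weak_hopf D eps S.
Local Notation sw := (sw D).
Local Notation lm_S := (lm_S W).
Local Notation lk_eps' := (lk_eps' W).
Local Notation lm_sw := (lm_sw W).


Lemma sw_ext (V : lmodType K) (F G : H -> H -> V) x :
  (forall a b, F a b = G a b) -> sw F x = sw G x.
Proof. by move=> E; apply: eq_bigr => p _; apply: E. Qed.

Lemma sw_swap (V : lmodType K) (F : H -> H -> H -> H -> V) x y :
  sw (fun a b => sw (F a b) y) x = sw (fun c d => sw (fun a b => F a b c d) x) y.
Proof. by rewrite /sw exchange_big. Qed.

Lemma sw_out (V U : lmodType K) (g : V -> U) (F : H -> H -> V) x :
  linmap g -> g (sw F x) = sw (fun a b => g (F a b)) x.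
Proof. by move=> L; rewrite /sw (lm_sum L). Qed.

Lemma sw_mulr (A : algType K) (F : H -> H -> A) x v :
  sw F x * v = sw (fun a b => F a b * v) x.
Proof. by rewrite /sw mulr_suml. Qed.

Lemma sw_mull (A : algType K) (F : H -> H -> A) x v :
  v * sw F x = sw (fun a b => v * F a b) x.
Proof. by rewrite /sw mulr_sumr. Qed.

Lemma sw_scale (V : lmodType K) (F : H -> H -> V) x c :
  c *: sw F x = sw (fun a b => c *: F a b) x.
Proof. by rewrite /sw scaler_sumr. Qed.

Lemma sw_add (V : lmodType K) (F G : H -> H -> V) x :
  sw F x + sw G x = sw (fun a b => F a b + G a b) x.
Proof. by rewrite /sw -big_split. Qed.

Lemma coassoc_sw (V : lmodType K) (F : H -> H -> H -> V) h : trilin F ->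
  sw (fun a b => sw (fun c d => F c d b) a) h = sw (fun a b => sw (fun c d => F a c d) b) h.
Proof.
move=> TF; have := coassoc W h TF; rewrite !big_allpairs_dep /=.
by rewrite /sw.
Qed.

Lemma mul_sw (V : lmodType K) (F : H -> H -> V) k h : bilin F ->
  sw F (k * h) = sw (fun a b => sw (fun c d => F (a * c) (b * d)) h) k.
Proof.
move=> BF; have := comul_mul W k h BF; rewrite !big_allpairs_dep /=.
by rewrite /sw.
Qed.

Lemma unit1_sw (V : lmodType K) (F : H -> H -> H -> V) : trilin F ->
  sw (fun a b => sw (fun c d => F c (a * d) b) 1) 1 = sw (fun a b => sw (fun c d => F c d b) a) 1.
Proof.
move=> TF; have := comul_unit1 W TF; rewrite !big_allpairs_dep /=.
by rewrite /sw.
Qed.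

Lemma unit2_sw (V : lmodType K) (F : H -> H -> H -> V) : trilin F ->
  sw (fun a b => sw (fun c d => F c d b) a) 1 = sw (fun a b => sw (fun c d => F a (b * c) d) 1) 1.
Proof.
move=> TF; have := comul_unit2 W TF; rewrite !big_allpairs_dep /=.
by rewrite /sw.
Qed.

Lemma counitL_sw (V : lmodType K) (g : H -> V) h : linmap g ->
  sw (fun a b => eps a *: g b) h = g h.
Proof.
move=> L; rewrite -{2}(counitL W h) (lm_sum L) /sw; apply: eq_bigr => p _.
by rewrite (lmZ L).
Qed.

Lemma counitR_sw (V : lmodType K) (g : H -> V) h : linmap g ->
  sw (fun a b => eps b *: g a) h = g h.
Proof.
move=> L; rewrite -{2}(counitR W h) (lm_sum L) /sw; apply: eq_bigr => p _.
by rewrite (lmZ L).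
Qed.

Lemma target_sw h : sw (fun a b => a * S b) h = sw (fun a b => eps (a * h) *: b) 1.
Proof. exact: antipode_target W h. Qed.

Lemma source_sw h : sw (fun a b => S a * b) h = sw (fun a b => eps (h * b) *: a) 1.
Proof. exact: antipode_source W h. Qed.

Lemma SHS_sw h : S h = sw (fun a b => sw (fun c d => S a * c * S d) b) h.
Proof. exact: antipode_SHS W h. Qed.

End WH2.

End WB.
Import WB.

Module WC.
Set Implicit Arguments. Unset Strict Implicit. Unset Printing Implicit Defensive.

Section WH3.
Variables (K : fieldType) (H : algType K).
Variables (D : H -> seq (H * H)) (eps : H -> K) (S : H -> H).
Hypothesis W : is_weak_hopf D eps S.
Local Notation sw := (sw D).
Local Notation lm_S := (lm_S W).
Local Notation lk_eps' := (lk_eps' W).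
Local Notation lm_sw := (lm_sw W).
Local Notation sw_lin := (sw_lin W).
Local Notation sw_ext := (sw_ext D).
Local Notation sw_swap := (sw_swap D).
Local Notation sw_out := (sw_out D).
Local Notation sw_mulr := (sw_mulr D).
Local Notation sw_mull := (sw_mull D).
Local Notation sw_scale := (sw_scale D).
Local Notation sw_add := (sw_add D).
Local Notation coassoc_sw := (coassoc_sw W).
Local Notation mul_sw := (mul_sw W).
Local Notation unit1_sw := (unit1_sw W).
Local Notation unit2_sw := (unit2_sw W).
Local Notation counitL_sw := (counitL_sw W).
Local Notation counitR_sw := (counitR_sw W).
Local Notation target_sw := (target_sw W).
Local Notation source_sw := (source_sw W).
Local Notation SHS_sw := (SHS_sw W).
Local Notation linS := (linS W).
Local Notation linEps := (linEps W).

Definition et (y : H) : H := sw (fun a b => eps (a * y) *: b) 1.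
Definition es (y : H) : H := sw (fun a b => eps (y * b) *: a) 1.

Lemma lm_et (f : H -> H) : linmap f -> linmap (fun x => et (f x)).
Proof. by move=> L; rewrite /et; lin. Qed.
Lemma lm_es (f : H -> H) : linmap f -> linmap (fun x => es (f x)).
Proof. by move=> L; rewrite /es; lin. Qed.

Lemma F1 (V : lmodType K) (F : H -> H -> V) x : bilin F ->
  sw (fun a b => F a (et b)) x = sw (fun a b => F (a * x) b) 1.
Proof.
move=> BF.
pose T u v w := sw (fun x1 x2 => eps (v * x2) *: F (u * x1) w) x.
have TT : trilin T by rewrite /T; tril.
have BF2 : forall a, linmap (F a) by case: BF.
transitivity (sw (fun p1 p2 => sw (fun q1 q2 => T p1 (q1 * p2) q2) 1) 1).
  rewrite -{1}[x]mul1r mul_sw; last by rewrite /et; bil.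
  apply: sw_ext => p1 p2; rewrite /T sw_swap; apply: sw_ext => x1 x2.
  rewrite /et (sw_out _ _ (BF2 _)); apply: sw_ext => q1 q2.
  by rewrite (lmZ (BF2 _)) mulrA.
rewrite sw_swap unit1_sw //.
rewrite -[RHS](@sw_ext _ (fun a b => sw (fun c d => eps d *: F c b) (a * x))); last first.
  by move=> a b; rewrite counitR_sw //; case: BF.
apply: sw_ext => a b; rewrite mul_sw; last by bil.
by apply: sw_ext => c d.
Qed.



Lemma F2 (V : lmodType K) (F : H -> H -> V) x : bilin F ->
  sw (fun a b => F (es a) b) x = sw (fun a b => F a (x * b)) 1.
Proof.
move=> BF.
pose T u v w := sw (fun x1 x2 => eps (x1 * v) *: F u (x2 * w)) x.
have TT : trilin T by rewrite /T; tril.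
have BF1 : forall b, linmap (fun a => F a b) by case: BF.
have BF2 : forall a, linmap (F a) by case: BF.
transitivity (sw (fun p1 p2 => sw (fun q1 q2 => T q1 (p1 * q2) p2) 1) 1).
  rewrite -{1}[x]mulr1 mul_sw; last by rewrite /es; bil.
  rewrite sw_swap; apply: sw_ext => p1 p2; rewrite /T sw_swap; apply: sw_ext => x1 x2.
  rewrite /es (sw_out _ _ (BF1 _)); apply: sw_ext => q1 q2.
  by rewrite (lmZ (BF1 _)) mulrA.
rewrite unit1_sw // coassoc_sw //.
apply: sw_ext => a b.
rewrite -(counitL_sw (g := F a)) //; rewrite mul_sw; last by bil.
rewrite /T sw_swap; by apply: sw_ext => c d; apply: sw_ext => e f.
Qed.

Lemma L1 h g : eps (h * et g) = eps (h * g).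
Proof.
rewrite /et /WB.sw mulr_sumr (lk_sum linEps).
have := counit_weak2 W h 1 g; rewrite mulr1 => ->.
by apply: eq_bigr => p _; rewrite -scalerAr (lkZ linEps) mulrC.
Qed.


Lemma L2 h g : eps (es h * g) = eps (h * g).
Proof.
rewrite /es /WB.sw mulr_suml (lk_sum linEps).
have := counit_weak2 W h 1 g; rewrite mulr1 => ->.
by apply: eq_bigr => p _; rewrite -scalerAl (lkZ linEps).
Qed.

Lemma et_S y : sw (fun a b => a * S b) y = et y.
Proof. exact: target_sw. Qed.
Lemma es_S y : sw (fun a b => S a * b) y = es y.
Proof. exact: source_sw. Qed.

Lemma I2 h g : sw (fun a b => a * et g * S b) h = et (h * g).
Proof.
transitivity (sw (fun a b => sw (fun c d => eps (c * g) *: (a * d * S b)) 1) h).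
  apply: sw_ext => a b; rewrite /et sw_mull sw_mulr; apply: sw_ext => c d.
  by rewrite -scalerAr -scalerAl.
transitivity (sw (fun a b => sw (fun c d => eps (es c * g) *: (d * S b)) a) h).
  apply: sw_ext => a b.
  by rewrite (F2 (F := fun u v => eps (u * g) *: (v * S b))); last by bil.
transitivity (sw (fun a b => sw (fun c d => eps (a * g) *: (c * S d)) b) h).
  rewrite -coassoc_sw; last by tril.
  by apply: sw_ext => a b; apply: sw_ext => c d; rewrite L2.
transitivity (sw (fun a b => eps (a * g) *: et b) h).
  by apply: sw_ext => a b; rewrite -sw_scale et_S.
rewrite (F1 (F := fun u v => eps (u * g) *: v)); last by bil.
by rewrite /et; apply: sw_ext => a b; rewrite mulrA.
Qed.

Lemma I1 h g : sw (fun a b => S a * es h * b) g = es (h * g).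
Proof.
transitivity (sw (fun a b => sw (fun c d => eps (h * d) *: (S a * (c * b))) 1) g).
  apply: sw_ext => a b; rewrite /es sw_mull sw_mulr; apply: sw_ext => c d.
  by rewrite -scalerAr -scalerAl mulrA.
transitivity (sw (fun a b => sw (fun c d => eps (h * et d) *: (S a * c)) b) g).
  apply: sw_ext => a b.
  by rewrite (F1 (F := fun u v => eps (h * v) *: (S a * u))); last by bil.
transitivity (sw (fun a b => sw (fun c d => eps (h * b) *: (S c * d)) a) g).
  rewrite coassoc_sw; last by tril.
  by apply: sw_ext => a b; apply: sw_ext => c d; rewrite L1.
transitivity (sw (fun a b => eps (h * b) *: es a) g).
  by apply: sw_ext => a b; rewrite -sw_scale es_S.
rewrite (F2 (F := fun u v => eps (h * v) *: u)); last by bil.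
by rewrite /es; apply: sw_ext => a b; rewrite mulrA.
Qed.

Lemma I4 x y : es x * et y = et y * es x.
Proof.
pose T (u v w : H) : H := (eps (x * w) * eps (u * y)) *: v.
have TT : trilin T by rewrite /T; tril.
transitivity (sw (fun a b => sw (fun c d => T c (a * d) b) 1) 1).
  rewrite /es /et sw_mulr; apply: sw_ext => a b; rewrite sw_mull; apply: sw_ext => c d.
  by rewrite /T -scalerAl -scalerAr scalerA mulrC.
rewrite unit1_sw // unit2_sw //.
rewrite /es /et sw_mulr; apply: sw_ext => a b; rewrite sw_mull; apply: sw_ext => c d.
by rewrite /T -scalerAl -scalerAr scalerA; congr (_ *: _); rewrite mulrC.
Qed.


Lemma Sform1 y : S y = sw (fun a b => S a * et b) y.
Proof.
rewrite SHS_sw; apply: sw_ext => a b; rewrite -et_S sw_mull.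
by apply: sw_ext => c d; rewrite mulrA.
Qed.

Lemma Sform2 y : S y = sw (fun a b => es a * S b) y.
Proof.
rewrite SHS_sw -coassoc_sw; last by tril.
by apply: sw_ext => a b; rewrite -es_S sw_mulr.
Qed.

Lemma S_anti h g : S (h * g) = S g * S h.
Proof.
pose M2 := sw (fun p1 p2 => sw (fun q1 q2 => es (p1 * q1) * S q2 * S p2) g) h.
pose M1 := sw (fun p1 p2 => sw (fun q1 q2 => S q1 * es p1 * et q2 * S p2) g) h.
have E21 : M2 = M1.
  rewrite /M2 /M1; apply: sw_ext => p1 p2.
  transitivity (sw (fun q1 q2 => sw (fun a b => S a * es p1 * b * S q2 * S p2) q1) g).
    by apply: sw_ext => q1 q2; rewrite -I1 !sw_mulr.
  rewrite coassoc_sw; last by tril.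
  apply: sw_ext => q1 q2; rewrite -et_S (sw_mull _ _ (S q1 * es p1)) sw_mulr; apply: sw_ext => a b.
  by rewrite !mulrA.
have E1 : S g * S h = M1.
  rewrite (Sform1 g) (Sform2 h) sw_mulr.
  transitivity (sw (fun q1 q2 => sw (fun p1 p2 => S q1 * et q2 * (es p1 * S p2)) h) g).
    by apply: sw_ext => q1 q2; rewrite sw_mull.
  rewrite sw_swap /M1; apply: sw_ext => p1 p2; apply: sw_ext => q1 q2.
  by rewrite mulrA -(mulrA (S q1) (et q2)) -I4 !mulrA.
rewrite E1 -E21 /M2 Sform1 mul_sw; last by bil.
pose T u v w := sw (fun q1 q2 => S (u * q1) * (v * et q2 * S w)) g.
have TT : trilin T by rewrite /T; tril.
transitivity (sw (fun a b => sw (fun c d => T a c d) b) h).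
  apply: sw_ext => p1 p2; rewrite /T sw_swap; apply: sw_ext => q1 q2.
  by rewrite -I2 sw_mull.
rewrite -coassoc_sw //; apply: sw_ext => p1 p2; rewrite /T.
transitivity (sw (fun r1 r2 => sw (fun q1 q2 => sw (fun s1 s2 => S (r1 * s1) * (r2 * (s2 * S q2) * S p2)) q1) g) p1).
  apply: sw_ext => r1 r2.
  transitivity (sw (fun q1 q2 => sw (fun s1 s2 => S (r1 * q1) * (r2 * (s1 * S s2) * S p2)) q2) g).
    apply: sw_ext => q1 q2; rewrite -et_S sw_mull sw_mulr sw_mull.
    by apply: sw_ext => s1 s2.
  by rewrite -coassoc_sw //; tril.
rewrite sw_swap; apply: sw_ext => q1 q2.
rewrite -es_S mul_sw; last by bil.
rewrite !sw_mulr; apply: sw_ext => r1 r2; rewrite !sw_mulr; apply: sw_ext => s1 s2.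
by rewrite !mulrA.
Qed.


Lemma Des (V : lmodType K) (G : H -> H -> V) y : bilin G ->
  sw G (es y) = sw (fun a b => G a (es y * b)) 1.
Proof.
move=> BG; have LG := sw_lin BG.
have BG1 : forall b, linmap (fun a => G a b) by case: BG.
have BG2 : forall a, linmap (G a) by case: BG.
pose T u v w := eps (y * w) *: G u v.
have TT : trilin T by rewrite /T; tril.
transitivity (sw (fun a b => sw (fun c d => T c d b) a) 1).
  rewrite /es (sw_out _ _ LG); apply: sw_ext => a b.
  by rewrite (lmZ LG) /T sw_scale.
rewrite -unit1_sw //; rewrite sw_swap; apply: sw_ext => c d.
rewrite /es sw_mulr (sw_out _ _ (BG2 c)); apply: sw_ext => a b.
by rewrite /T -scalerAl (lmZ (BG2 c)).
Qed.

Lemma Det (V : lmodType K) (G : H -> H -> V) y : bilin G ->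
  sw G (et y) = sw (fun a b => G (a * et y) b) 1.
Proof.
move=> BG; have LG := sw_lin BG.
have BG1 : forall b, linmap (fun a => G a b) by case: BG.
have BG2 : forall a, linmap (G a) by case: BG.
pose T u v w := eps (u * y) *: G v w.
have TT : trilin T by rewrite /T; tril.
transitivity (sw (fun a b => sw (fun c d => T a c d) b) 1).
  rewrite /et (sw_out _ _ LG); apply: sw_ext => a b.
  by rewrite (lmZ LG) /T sw_scale.
rewrite -coassoc_sw // -unit1_sw //; apply: sw_ext => a b.
rewrite /et sw_mull (sw_out _ _ (BG1 b)); apply: sw_ext => c d.
by rewrite /T -scalerAr (lmZ (BG1 b)).
Qed.

Lemma es1 : es 1 = 1.
Proof. by rewrite /es -[RHS](counitR_sw (g := id)) //; apply: sw_ext => a b; rewrite mul1r. Qed.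
Lemma et1 : et 1 = 1.
Proof. by rewrite /et -[RHS](counitL_sw (g := id)) //; apply: sw_ext => a b; rewrite mulr1. Qed.

Lemma S1 : S 1 = 1.
Proof.
rewrite SHS_sw -coassoc_sw; last by tril.
rewrite unit2_sw; last by tril.
transitivity (es 1 * et 1); last by rewrite es1 et1 mulr1.
rewrite -es_S -et_S sw_mulr; apply: sw_ext => a b.
rewrite sw_mull; apply: sw_ext => c d.
by rewrite !mulrA.
Qed.


Lemma SE1 y : S (et y) = es (et y).
Proof.
rewrite -es_S Det; last by bil.
transitivity (S (et y) * es 1); first by rewrite es1 mulr1.
rewrite -es_S sw_mull; apply: sw_ext => a b.
by rewrite S_anti mulrA.
Qed.

Lemma SE2 x : S (es x) = et (es x).
Proof.
rewrite -et_S Des; last by bil.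
transitivity (et 1 * S (es x)); first by rewrite et1 mul1r.
rewrite -et_S sw_mulr; apply: sw_ext => a b.
by rewrite S_anti mulrA.
Qed.

Lemma W6 (V : lmodType K) (G : H -> H -> V) : bilin G ->
  sw G 1 = sw (fun a b => G (S b) (S a)) 1.
Proof.
move=> BG.
have BG1 : forall b, linmap (fun a => G a b) by case: BG.
have BG2 : forall a, linmap (G a) by case: BG.
have Les : linmap es by apply: lm_es.
have Let : linmap et by apply: lm_et.
symmetry.
transitivity (sw (fun a b => G (S (et b)) (S a)) 1).
  rewrite (F1 (F := fun u v => G (S v) (S u))); last by bil.
  by apply: sw_ext => a b; rewrite mulr1.
transitivity (sw (fun r1 r2 => G (es r2) (S (es r1))) 1).
  transitivity (sw (fun a b => sw (fun r1 r2 => eps (r1 * b) *: G (es r2) (S a)) 1) 1).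
    apply: sw_ext => a b; rewrite SE1 {1}/et (sw_out _ _ Les) (sw_out _ _ (BG1 _)).
    by apply: sw_ext => r1 r2; rewrite (lmZ Les) (lmZ (BG1 _)).
  rewrite sw_swap; apply: sw_ext => r1 r2.
  rewrite {2}/es (sw_out _ _ linS) (sw_out _ _ (BG2 _)); apply: sw_ext => a b.
  by rewrite (lmZ linS) (lmZ (BG2 _)).
transitivity (sw (fun r1 r2 => G (es r2) (et r1)) 1).
  transitivity (sw (fun a b => G (es (1 * b)) (et a)) 1); last first.
    by apply: sw_ext => a b; rewrite mul1r.
  rewrite -(F2 (F := fun u v => G (es v) (et u)) 1); last by bil.
  by apply: sw_ext => a b; rewrite SE2.
transitivity (sw (fun q1 q2 => sw (fun p1 p2 => eps (p1 * q2) *: G q1 p2) 1) 1).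
  transitivity (sw (fun r1 r2 => sw (fun q1 q2 => sw (fun p1 p2 => (eps (p1 * r1) * eps (r2 * q2)) *: G q1 p2) 1) 1) 1).
    apply: sw_ext => r1 r2; rewrite {1}/es (sw_out _ _ (BG1 _)); apply: sw_ext => q1 q2.
    rewrite (lmZ (BG1 _)) /et (sw_out _ _ (BG2 _)) sw_scale; apply: sw_ext => p1 p2.
    by rewrite (lmZ (BG2 _)) scalerA mulrC.
  rewrite sw_swap; apply: sw_ext => q1 q2; rewrite sw_swap; apply: sw_ext => p1 p2.
  rewrite /WB.sw -scaler_suml; congr (_ *: _).
  by have := counit_weak1 W p1 1 q2; rewrite mulr1.
transitivity (sw (fun a b => G (a * 1) b) 1); last by apply: sw_ext => a b; rewrite mulr1.
rewrite -(F1 (F := G) 1) //; apply: sw_ext => a b.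
by rewrite /et (sw_out _ _ (BG2 _)); apply: sw_ext => c d; rewrite (lmZ (BG2 _)).
Qed.



Lemma P1 (V : lmodType K) (G : H -> H -> V) u : bilin G ->
  sw G (es u) = sw (fun a b => sw (fun e k => sw (fun f d => G (S e * f) (S a * d)) k) b) u.
Proof.
move=> BG.
have BG1 : forall b, linmap (fun a => G a b) by case: BG.
have BG2 : forall a, linmap (G a) by case: BG.
rewrite Des //.
transitivity (sw (fun a b => sw (fun q1 q2 => G q1 (S a * (b * q2))) 1) u).
  rewrite sw_swap; apply: sw_ext => q1 q2.
  rewrite -es_S sw_mulr (sw_out _ _ (BG2 _)); apply: sw_ext => a b.
  by rewrite mulrA.
apply: sw_ext => a b.
rewrite -(F2 (F := fun x y => G x (S a * y))); last by bil.
rewrite -coassoc_sw; last by tril.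
apply: sw_ext => c d; rewrite -es_S (sw_out _ _ (BG1 _)).
by apply: sw_ext.
Qed.

Lemma W2 (V : lmodType K) (F : H -> H -> V) h : bilin F ->
  sw F (S h) = sw (fun a b => F (S b) (S a)) h.
Proof.
move=> BF.
have BF1 : forall b, linmap (fun a => F a b) by case: BF.
have BF2 : forall a, linmap (F a) by case: BF.
have LF := sw_lin BF.
pose Phi a e k w := sw (fun f d => sw (fun z1 z2 => F (S e * f * z1) (S a * d * z2)) (S w)) k.
transitivity (sw (fun u w => sw (fun a b => sw (fun e k => Phi a e k w) b) u) h).
  rewrite Sform2 (sw_out _ _ LF); apply: sw_ext => u w.
  rewrite mul_sw; last by bil.
  rewrite P1; last by bil.
  by [].
rewrite coassoc_sw; last by rewrite /Phi; tril.
transitivity (sw (fun a n => sw (fun e m => sw (fun q1 q2 => F (S e * (et m * q1)) (S a * q2)) 1) n) h).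
  apply: sw_ext => a n.
  rewrite coassoc_sw; last by rewrite /Phi; tril.
  apply: sw_ext => e m.
  pose F' x y := F (S e * x) (S a * y).
  have BF' : bilin F' by rewrite /F'; bil.
  transitivity (sw F' (et m)).
    rewrite -et_S (sw_out _ _ (sw_lin BF')); apply: sw_ext => k w.
    rewrite /Phi mul_sw //; apply: sw_ext => f d; apply: sw_ext => z1 z2.
    by rewrite /F' !mulrA.
  rewrite Det //.
  transitivity (sw (fun q1 q2 => F' (es q1 * et m) q2) 1).
    rewrite (F2 (F := fun x y => F' (x * et m) y)); last by rewrite /F'; bil.
    by apply: sw_ext => q1 q2; rewrite mul1r.
  transitivity (sw (fun q1 q2 => F' (et m * es q1) q2) 1).
    by apply: sw_ext => q1 q2; rewrite I4.
  rewrite (F2 (F := fun x y => F' (et m * x) y)); last by rewrite /F'; bil.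
  by apply: sw_ext => q1 q2; rewrite mul1r.
transitivity (sw (fun a n => sw (fun q1 q2 => F (S n * q1) (S a * q2)) 1) h).
  apply: sw_ext => a n; rewrite sw_swap; apply: sw_ext => q1 q2.
  rewrite (Sform1 n) sw_mulr (sw_out _ _ (BF1 _)); apply: sw_ext => e m.
  by rewrite mulrA.
transitivity (sw (fun a n => sw (fun q1 q2 => F (S (q2 * n)) (S (q1 * a))) 1) h).
  apply: sw_ext => a n; rewrite (W6 (G := fun x y => F (S n * x) (S a * y))); last by bil.
  by apply: sw_ext => q1 q2; rewrite !S_anti.
rewrite sw_swap -[in RHS](mul1r h) mul_sw; last by bil.
by [].
Qed.


Section Sinv.
Variable Sinv : H -> H.
Hypothesis SK : cancel S Sinv.
Hypothesis KS : cancel Sinv S.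

Lemma linSinv : linmap Sinv.
Proof.
move=> c x y; apply: (can_inj SK); rewrite KS.
by have := linS c (Sinv x) (Sinv y); rewrite !KS => ->.
Qed.

Lemma Sinv_anti a b : Sinv (a * b) = Sinv b * Sinv a.
Proof. by apply: (can_inj SK); rewrite S_anti !KS. Qed.

Lemma W2inv (V : lmodType K) (F : H -> H -> V) y : bilin F ->
  sw F (Sinv y) = sw (fun a b => F (Sinv b) (Sinv a)) y.
Proof.
move=> BF.
have BF1 : forall b, linmap (fun a => F a b) by case: BF.
have BF2 : forall a, linmap (F a) by case: BF.
have LSi := linSinv.
rewrite -{2}[y]KS W2; last first.
  by split=> ? /=; [exact: (lm_comp (BF2 _) LSi) | exact: (lm_comp (BF1 _) LSi)].
by apply: sw_ext => a b; rewrite !SK.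
Qed.

End Sinv.

End WH3.

End WC.
Import WC.

Module WD.
Set Implicit Arguments. Unset Strict Implicit. Unset Printing Implicit Defensive.

Section Par.
Variables (K : fieldType) (H : algType K).
Variables (D : H -> seq (H * H)) (eps : H -> K) (S Sinv : H -> H).
Hypothesis W : is_weak_hopf D eps S.
Hypothesis SK : cancel S Sinv.
Hypothesis KS : cancel Sinv S.
Variables (A : algType K) (pi : H -> A).
Hypothesis Hrel : wpar_relations D S pi.

Local Notation sw := (sw D).
Local Notation lm_S := (lm_S W).
Local Notation lk_eps' := (lk_eps' W).
Local Notation lm_sw := (lm_sw W).
Local Notation sw_lin := (sw_lin W).
Local Notation sw_ext := (sw_ext D).
Local Notation sw_swap := (sw_swap D).
Local Notation sw_out := (sw_out D).
Local Notation sw_mulr := (sw_mulr D).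
Local Notation sw_mull := (sw_mull D).
Local Notation sw_scale := (sw_scale D).
Local Notation coassoc_sw := (coassoc_sw W).
Local Notation mul_sw := (mul_sw W).
Local Notation unit1_sw := (unit1_sw W).
Local Notation unit2_sw := (unit2_sw W).
Local Notation linS := (linS W).
Local Notation es := (es D eps).
Local Notation et := (et D eps).
Local Notation es_S := (es_S W).
Local Notation et_S := (et_S W).
Local Notation es1 := (es1 W).
Local Notation et1 := (et1 W).
Local Notation S_anti := (S_anti W).
Local Notation F1 := (F1 W).
Local Notation F2 := (F2 W).
Local Notation W6 := (W6 W).
Local Notation linSinv := (linSinv W SK KS).
Local Notation Sinv_anti := (Sinv_anti W SK KS).
Local Notation W2inv := (W2inv W SK KS).

Lemma Lpi : linmap pi. Proof. by case: Hrel. Qed.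
Lemma pi1 : pi 1 = 1. Proof. by case: Hrel. Qed.
Lemma R2 h k : sw (fun a b => pi h * pi a * pi (S b)) k = sw (fun a b => pi (h * a) * pi (S b)) k.
Proof. by case: Hrel => _ _ R _ _; apply: R. Qed.
Lemma R3 h k : sw (fun a b => pi h * pi (S a) * pi b) k = sw (fun a b => pi (h * S a) * pi b) k.
Proof. by case: Hrel => _ _ _ R _; apply: R. Qed.
Lemma R4 h k : sw (fun a b => pi a * pi (S b) * pi k) h = sw (fun a b => pi a * pi (S b * k)) h.
Proof. by case: Hrel => _ _ _ _ [R _ _]; apply: R. Qed.
Lemma R5 h k : sw (fun a b => pi (S a) * pi b * pi k) h = sw (fun a b => pi (S a) * pi (b * k)) h.
Proof. by case: Hrel => _ _ _ _ [_ R _]; apply: R. Qed.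
Lemma R6 h : pi h = sw (fun a b => sw (fun c d => pi a * pi (S c) * pi d) b) h.
Proof. by case: Hrel => _ _ _ _ [_ _ R]; apply: R. Qed.

Let LSi := linSinv.
Let LP := Lpi.
Local Ltac lin2 := repeat first
  [ lin_step
  | apply: (lm_comp (g := pi)); [exact: LP|]
  | apply: (lm_comp (g := Sinv)); [exact: LSi|] ].
Local Ltac bil2 := split=> ? /=; lin2.
Local Ltac tril2 := split=> ? ? /=; lin2.

Definition Ez z := sw (fun a b => pi a * pi (S b)) z.
Definition Et z := sw (fun a b => pi (S a) * pi b) z.

Lemma E1 : Ez 1 = 1.
Proof.
rewrite -pi1 [RHS]R6 -coassoc_sw; last by tril2.
transitivity (sw (fun a b => sw (fun c d => pi c * pi (S d * b)) a) 1); last first.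
  by apply: sw_ext => a b; rewrite -R4.
rewrite -unit1_sw; last by tril2.
rewrite sw_swap; apply: sw_ext => c d.
transitivity (pi c * pi (S d * es 1)); first by rewrite es1 mulr1.
rewrite -es_S sw_mull (sw_out _ _ LP) sw_mull; apply: sw_ext => a b.
by rewrite S_anti !mulrA.
Qed.


Lemma Et1 : Et 1 = 1.
Proof.
rewrite -pi1 [RHS]R6.
transitivity (sw (fun a b => sw (fun c d => pi (a * S c) * pi d) b) 1); last first.
  by apply: sw_ext => a b; rewrite -R3.
rewrite -coassoc_sw; last by tril2.
rewrite -unit1_sw; last by tril2.
apply: sw_ext => a b.
transitivity (pi (et 1 * S a) * pi b); first by rewrite et1 mul1r.
rewrite -et_S !sw_mulr (sw_out _ _ LP) sw_mulr; apply: sw_ext => c d.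
by rewrite S_anti !mulrA.
Qed.

Lemma part_a h k : Ez k * pi h = sw (fun x y => pi y * Ez (Sinv x * k)) h.
Proof.
rewrite /Ez sw_mulr R4.
pose Psi u t := sw (fun c d => pi (t * c) * pi (S d * u)) k.
transitivity (sw (fun x y => sw (fun u v => Psi u (y * Sinv v)) x) h); last first.
  apply: sw_ext => x y; symmetry; rewrite /Ez sw_mull.
  under sw_ext => a b do rewrite mulrA.
  rewrite R2 mul_sw; last by bil2.
  rewrite W2inv; last by bil2.
  apply: sw_ext => u v; rewrite /Psi; apply: sw_ext => c d.
  by rewrite S_anti KS !mulrA.
rewrite coassoc_sw; last by rewrite /Psi; tril2.
transitivity (sw (fun u m => Psi u (Sinv (et m))) h); last first.
  apply: sw_ext => u m; rewrite -et_S (sw_out _ _ LSi).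
  have LPsi : linmap (Psi u) by rewrite /Psi; lin2.
  rewrite (sw_out _ _ LPsi); apply: sw_ext => v y.
  by rewrite Sinv_anti SK.
rewrite (F1 (F := fun u t => Psi u (Sinv t))); last by rewrite /Psi; bil2.
rewrite (W6 (G := fun x y => Psi (x * h) (Sinv y))); last by rewrite /Psi; bil2.
rewrite -[in LHS](mul1r k) mul_sw; last by bil2.
apply: sw_ext => q1 q2; rewrite /Psi SK; apply: sw_ext => c d.
by rewrite S_anti !mulrA.
Qed.

Lemma part_b h k : pi h * Et k = sw (fun x y => Et (k * Sinv y) * pi x) h.
Proof.
rewrite /Et sw_mull.
transitivity (sw (fun a b => pi h * pi (S a) * pi b) k).
  by apply: sw_ext => a b; rewrite mulrA.
rewrite R3.
pose Psi t v := sw (fun a b => pi (v * S a) * pi (b * t)) k.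
transitivity (sw (fun x y => sw (fun u v => Psi (Sinv u * x) v) y) h); last first.
  apply: sw_ext => x y; symmetry; rewrite /Et sw_mulr.
  rewrite R5 mul_sw; last by bil2.
  transitivity (sw (fun a b => sw (fun u v => pi (S (a * Sinv v)) * pi (b * Sinv u * x)) y) k).
    by apply: sw_ext => a b; rewrite W2inv //; bil2.
  rewrite sw_swap; apply: sw_ext => u v; rewrite /Psi; apply: sw_ext => a b.
  by rewrite S_anti KS !mulrA.
rewrite -coassoc_sw; last by rewrite /Psi; tril2.
have LPsi : forall v, linmap (fun t => Psi t v) by move=> v; rewrite /Psi; lin2.
transitivity (sw (fun n v => Psi (Sinv (es n)) v) h); last first.
  apply: sw_ext => n v; rewrite -es_S (sw_out _ _ LSi) (sw_out _ _ (LPsi v)).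
  by apply: sw_ext => a b; rewrite Sinv_anti SK.
rewrite (F2 (F := fun t v => Psi (Sinv t) v)); last by rewrite /Psi; bil2.
rewrite (W6 (G := fun x y => Psi (Sinv x) (h * y))); last by rewrite /Psi; bil2.
rewrite -[in LHS](mulr1 k) mul_sw; last by bil2.
rewrite sw_swap; apply: sw_ext => q1 q2; rewrite /Psi SK; apply: sw_ext => a b.
by rewrite S_anti !mulrA.
Qed.



Lemma Ak1 g : pi g = sw (fun x y => pi y * Ez (Sinv x)) g.
Proof.
have := part_a g 1; rewrite E1 mul1r => ->.
by apply: sw_ext => x y; rewrite mulr1.
Qed.

Lemma Bk1 g : pi g = sw (fun x y => Et (Sinv y) * pi x) g.
Proof.
have := part_b g 1; rewrite Et1 mulr1 => ->.
by apply: sw_ext => x y; rewrite mul1r.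
Qed.

Lemma part_c h k : Ez k * pi h = sw (fun x y => Et (Sinv y) * Ez k * pi x) h.
Proof.
pose T u v w := Et (Sinv w) * pi v * Ez (Sinv u * k).
have TT : trilin T by rewrite /T /Et /Ez; tril2.
transitivity (sw (fun x y => sw (fun v w => T x v w) y) h).
  rewrite part_a; apply: sw_ext => x y; rewrite [pi y]Bk1 sw_mulr.
  by apply: sw_ext.
rewrite -coassoc_sw //; apply: sw_ext => x y.
by rewrite -mulrA part_a sw_mull; apply: sw_ext => u v; rewrite /T mulrA.
Qed.

Lemma part_d h k : pi h * Et k = sw (fun x y => pi y * Et k * Ez (Sinv x)) h.
Proof.
pose T u v w := Et (k * Sinv w) * pi v * Ez (Sinv u).
have TT : trilin T by rewrite /T /Et /Ez; tril2.
transitivity (sw (fun x y => sw (fun u v => T u v y) x) h).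
  rewrite part_b; apply: sw_ext => x y; rewrite [pi x]Ak1 sw_mull.
  by apply: sw_ext => u v; rewrite /T mulrA.
rewrite coassoc_sw //; apply: sw_ext => x y.
by rewrite part_b sw_mulr.
Qed.

End Par.


End WD.
Import WD.

Theorem proposition4p5 (K : fieldType) (H : algType K)
    (D : H -> seq (H * H)) (eps : H -> K) (S Sinv : H -> H) :
  is_weak_hopf D eps S ->
  cancel S Sinv -> cancel Sinv S ->
  forall (A : algType K) (pi : H -> A), is_Hparw D S pi ->
  forall h k : H,
  [/\ (* (a) E_k[h] = [h_2] E_{S^-1(h_1) k} *)
      Eop D S pi k * pi h
        = \sum_(p <- D h) pi p.2 * Eop D S pi (Sinv p.1 * k),
      (* (b) [h] ~E_k = ~E_{k S^-1(h_2)} [h_1] *)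
      pi h * Etop D S pi k
        = \sum_(p <- D h) Etop D S pi (k * Sinv p.2) * pi p.1,
      (* (c) E_k[h] = ~E_{S^-1(h_2)} E_k [h_1] *)
      Eop D S pi k * pi h
        = \sum_(p <- D h) Etop D S pi (Sinv p.2) * Eop D S pi k * pi p.1 &
      (* (d) [h] ~E_k = [h_2] ~E_k E_{S^-1(h_1)} *)
      pi h * Etop D S pi k
        = \sum_(p <- D h) pi p.2 * Etop D S pi k * Eop D S pi (Sinv p.1)].
Proof.
move=> W SK KS A pi [Hrel _] h k.
split.
- exact: (WD.part_a W SK KS Hrel h k).
- exact: (WD.part_b W SK KS Hrel h k).
- exact: (WD.part_c W SK KS Hrel h k).
- exact: (WD.part_d W SK KS Hrel h k).
Qed.
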